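(* Let $\mathcal{P}$ be a set of mutually commuting Pauli operators on $n$ qubits, and let $r$ be the number of independent generators of $\mathcal{P}$ (the $\mathbb{F}_2$-rank of its tableau). Run the qubitwise diagonalization algorithm described in the context on $\mathcal{P}$, choosing at every stage $\alpha$ a nonzero null vector of symplectic weight at most $r^{(\alpha)}+1$ (i.e. one corresponding to a dependent set of at most $r^{(\alpha)}+1$ columns of the tableau). Then the total number of CNOT gate conjugations in the resulting diagonalizing circuit is at most $nr-\frac{r(r+1)}{2}$.
   Context: A Pauli operator on $m$ qubits is encoded, up to phase, by $u=(\boldsymbol{x},\boldsymbol{z})\in\mathbb{F}_2^{2m}$ via $P=\bigotimes_{j=1}^m X^{x_j}Z^{z_j}$. For a set of Pauli operators, the tableau $(\mathcal{X}\mid\mathcal{Z})$ is the binary matrix whose rows encode the operators. An operator is diagonal on qubit $j$ if its $j$-th tensor factor is $I$ or $Z$. The symplectic weight of $(\boldsymbol{v},\boldsymbol{w})\in\mathbb{F}_2^{2m}$ is $\omega(\boldsymbol{v},\boldsymbol{w})=|\{j: (v_j,w_j)\neq(0,0)\}|$. Qubitwise diagonalization algorithm. Input: a set of mutually commuting Pauli operators on $n$ qubits. At stage $\alpha$: discard the qubits on which all operators are already diagonal; let $n^{(\alpha)}$ be the number of remaining qubits (stop if $n^{(\alpha)}=0$); let $T^{(\alpha)}$ be an independent generating set of the operators restricted to the remaining qubits, of size $r^{(\alpha)}$, and let $M^{(\alpha)}=(\mathcal{X}^{(\alpha)}\mid\mathcal{Z}^{(\alpha)})$ be its $r^{(\alpha)}\times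 2n^{(\alpha)}$ tableau. Choose a nonzero $(\boldsymbol{v},\boldsymbol{w})$ with $M^{(\alpha)}(\boldsymbol{v};\boldsymbol{w})=0$ over $\mathbb{F}_2$, and a qubit $i$ with $(v_i,w_i)\neq(0,0)$. Step 1: for each qubit $j$, if $v_j=0,w_j=1$ conjugate by $\mathrm{H}(j)$; if $v_j=w_j=1$ conjugate by $\mathrm{S}(j)$ then $\mathrm{H}(j)$. Step 2: for each $j\neq i$ with $(v_j,w_j)\neq(0,0)$, conjugate by $\mathrm{CNOT}(j,i)$. After this all operators are diagonal on qubit $i$; then proceed to stage $\alpha+1$. The output circuit is the composition of all gates used. *)

(* Defs.v *)
(* Pauli operators up to phase as rows of a binary tableau over 'F_2. *)
From HB Require Import structures.
From mathcomp Require Import all_boot all_order all_algebra.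
Set Implicit Arguments. Unset Strict Implicit. Unset Printing Implicit Defensive.
Import GRing.Theory.
Local Open Scope ring_scope.

(* A set of m Pauli operators on n qubits, encoded by its tableau (X | Z):
   row a encodes the operator  (x)_j X^{X a j} Z^{Z a j}. *)
Definition tableau (m n : nat) := ('M['F_2]_(m, n) * 'M['F_2]_(m, n))%type.

Definition commuting m n (T : tableau m n) : Prop :=
  forall a b : 'I_m,
    \sum_(j < n) (T.1 a j * T.2 b j + T.2 a j * T.1 b j) = 0.

Definition tab_rank m n (T : tableau m n) : nat := \rank (row_mx T.1 T.2).

(* Qubits on which some operator is not diagonal (tensor factor X or Y). *)
Definition remaining m n (T : tableau m n) : {set 'I_n} :=
  [set j | [exists a, T.1 a j != 0]].

(* Restriction of the operators to a set of qubits: the other columns are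
   dropped (here: zeroed, which does not change ranks or null vectors
   supported on the kept qubits). *)
Definition restrict m n (R : {set 'I_n}) (M : 'M['F_2]_(m, n)) : 'M['F_2]_(m, n) :=
  \matrix_(a, j) (if j \in R then M a j else 0).

Definition stage_rank m n (T : tableau m n) : nat :=
  let R := remaining T in tab_rank (restrict R T.1, restrict R T.2).

Inductive gate (n : nat) :=
| Hg of 'I_n
| Sg of 'I_n
| CNOTg of 'I_n & 'I_n. (* CNOT(control, target) *)

Definition is_cnot n (g : gate n) : bool :=
  if g is CNOTg _ _ then true else false.

Definition apply_gate m n (g : gate n) (T : tableau m n) : tableau m n :=
  match g with
  | Hg j => (\matrix_(a, k) (if k == j then T.2 a k else T.1 a k),
             \matrix_(a, k) (if k == j then T.1 a k else T.2 a k))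
  | Sg j => (T.1,
             \matrix_(a, k) (if k == j then T.2 a k + T.1 a k else T.2 a k))
  | CNOTg c t =>
      (* X_c -> X_c X_t, Z_t -> Z_c Z_t *)
      (\matrix_(a, k) (if k == t then T.1 a k + T.1 a c else T.1 a k),
       \matrix_(a, k) (if k == c then T.2 a k + T.2 a t else T.2 a k))
  end.

Definition apply_circuit m n (gs : seq (gate n)) (T : tableau m n) : tableau m n :=
  foldl (fun T' g => apply_gate g T') T gs.

Definition cnot_count n (gs : seq (gate n)) : nat := count (@is_cnot n) gs.

Definition step1_gates n (v w : 'I_n -> 'F_2) (j : 'I_n) : seq (gate n) :=
  if (v j == 0) && (w j == 1) then [:: Hg j]
  else if (v j == 1) && (w j == 1) then [:: Sg j; Hg j]
  else [::].

Definition in_support n (v w : 'I_n -> 'F_2) (j : 'I_n) : bool :=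
  (v j != 0) || (w j != 0).

Definition stage_gates n (v w : 'I_n -> 'F_2) (i : 'I_n) : seq (gate n) :=
  flatten [seq step1_gates v w j | j <- enum 'I_n] ++
  [seq CNOTg j i | j <- enum 'I_n & (j != i) && in_support v w j].

Definition stage m n (T : tableau m n) (gs : seq (gate n)) (T' : tableau m n) : Prop :=
  let R := remaining T in
  R != set0 /\
  exists (v w : 'I_n -> 'F_2) (i : 'I_n),
    [/\
        (forall j, j \notin R -> v j = 0 /\ w j = 0),
        (forall a, \sum_(j < n) (T.1 a j * v j + T.2 a j * w j) = 0),
        in_support v w i,
        (#|[set j | in_support v w j]| <= (stage_rank T).+1)%N &
        gs = stage_gates v w i /\ T' = apply_circuit gs T].

Inductive run m n : tableau m n -> seq (gate n) -> Prop :=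
| run_stop T : remaining T = set0 -> run T [::]
| run_step T gs T' gs' : stage T gs T' -> run T' gs' -> run T (gs ++ gs').

(* Main.v *)
Require Import Defs.
From mathcomp Require Import all_boot all_order all_algebra.
From mathcomp Require Import zify.
Import GRing.Theory.
Local Open Scope ring_scope.
Lemma F2cases (x : 'F_2) : x = 0 \/ x = 1.
Proof. case: x => [[|[|//]]] ? ; [left|right]; exact: val_inj. Qed.
Lemma F2_11 : (1 + 1 : 'F_2) = 0. Proof. exact: val_inj. Qed.
Lemma F2_add (x : 'F_2) : x + x = 0. Proof. by case: (F2cases x) => ->; [rewrite addr0|exact: F2_11]. Qed.
Lemma sum_sel n (x : 'I_n -> 'F_2) p (b : bool) :
  \sum_(j < n) x j * ((j == p) && b)%:R = if b then x p else 0.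
Proof.
rewrite (bigD1 p) //= eqxx big1 ?addr0.
  by case: b; rewrite ?mulr1 ?mulr0.
by move=> j /negbTE ->; rewrite mulr0.
Qed.

Lemma lin_rank m n (T T' : tableau m n) (c11 c12 c21 c22 : 'I_n -> 'I_n -> 'F_2) :
  (forall a k, T'.1 a k = \sum_j (T.1 a j * c11 j k + T.2 a j * c21 j k)) ->
  (forall a k, T'.2 a k = \sum_j (T.1 a j * c12 j k + T.2 a j * c22 j k)) ->
  (tab_rank T' <= tab_rank T)%N.
Proof.
move=> h1 h2; rewrite /tab_rank.
set C := block_mx (\matrix_(j, k) c11 j k) (\matrix_(j, k) c12 j k)
                  (\matrix_(j, k) c21 j k) (\matrix_(j, k) c22 j k).
have -> : row_mx T'.1 T'.2 = row_mx T.1 T.2 *m C.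
  rewrite mul_row_block; congr row_mx; apply/matrixP=> a k;
  rewrite !mxE; first [move: (h1 a k) => -> | move: (h2 a k) => ->];
  by rewrite big_split /=; congr (_ + _); apply: eq_bigr => j _; rewrite !mxE.
exact: mxrankM_maxl.
Qed.

Lemma isotropic m n (T : tableau m n) : commuting T -> (tab_rank T <= n)%N.
Proof.
move=> hc; rewrite /tab_rank.
set A := row_mx T.1 T.2; set B := row_mx T.2 T.1.
set J := block_mx (0 : 'M['F_2]_(n,n)) 1%:M 1%:M 0.
have hB : B = A *m J by rewrite /A /J mul_row_block !mulmx0 !mulmx1 add0r addr0.
have hA : A = B *m J by rewrite /B /J mul_row_block !mulmx0 !mulmx1 add0r addr0.
have eqr : \rank B = \rank A.
  apply/eqP; rewrite eqn_leq; apply/andP; split.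
    by rewrite hB mxrankM_maxl.
  by rewrite [X in (\rank X <= _)%N]hA mxrankM_maxl.
have h0 : A *m B^T = 0.
  rewrite /A /B tr_row_mx mul_row_col; apply/matrixP=> a b.
  rewrite !mxE -big_split /=; rewrite -[RHS](hc a b); apply: eq_bigr => j _; rewrite !mxE.
  by [].
have := mxrankS (introT sub_kermxP h0); rewrite mxrank_ker mxrank_tr eqr.
move=> h; have := rank_leq_col A; lia.
Qed.

Lemma gate_rank m n (g : gate n) (T : tableau m n) :
  (tab_rank (apply_gate g T) <= tab_rank T)%N.
Proof.
case: g => [j0|j0|c t] /=.
- apply: (@lin_rank _ _ T _ (fun j k => ((j == k) && (k != j0))%:R)
     (fun j k => ((j == k) && (k == j0))%:R)
     (fun j k => ((j == k) && (k == j0))%:R)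
     (fun j k => ((j == k) && (k != j0))%:R)) => a k /=;
  by rewrite mxE big_split /= !sum_sel; case: (k == j0); rewrite ?addr0 ?add0r.
- apply: (@lin_rank _ _ T _ (fun j k => ((j == k) && true)%:R)
     (fun j k => ((j == k) && (k == j0))%:R)
     (fun j k => 0)
     (fun j k => ((j == k) && true)%:R)) => a k /=.
    by rewrite big_split /= !sum_sel big1 ?addr0 // => j _; rewrite mulr0.
  by rewrite mxE big_split /= !sum_sel; case: (k == j0); rewrite ?addr0 ?add0r // addrC.
- apply: (@lin_rank _ _ T _ (fun j k => ((j == k) && true)%:R + ((j == c) && (k == t))%:R)
     (fun j k => 0)
     (fun j k => 0)
     (fun j k => ((j == k) && true)%:R + ((j == t) && (k == c))%:R)) => a k /=.
    rewrite mxE big_split /= [X in _ = _ + X]big1 ?addr0; last by move=> j _; rewrite mulr0.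
    rewrite (eq_bigr (fun j => T.1 a j * ((j == k) && true)%:R + T.1 a j * ((j == c) && (k == t))%:R)); last by move=> j _; rewrite mulrDr.
    by rewrite big_split /= !sum_sel; case: (k == t); rewrite ?addr0.
  rewrite mxE big_split /= big1 ?add0r; last by move=> j _; rewrite mulr0.
  rewrite (eq_bigr (fun j => T.2 a j * ((j == k) && true)%:R + T.2 a j * ((j == t) && (k == c))%:R)); last by move=> j _; rewrite mulrDr.
  by rewrite big_split /= !sum_sel; case: (k == c); rewrite ?addr0.
Qed.

Lemma circuit_rank m n (gs : seq (gate n)) (T : tableau m n) :
  (tab_rank (apply_circuit gs T) <= tab_rank T)%N.
Proof.
elim: gs T => [|g gs IH] T //=.
apply: leq_trans (IH _) _; exact: gate_rank.
Qed.

Lemma restrict_rank m n (T : tableau m n) : (stage_rank T <= tab_rank T)%N.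
Proof.
rewrite /stage_rank.
set R := remaining T.
apply: (@lin_rank _ _ T _ (fun j k => ((j == k) && (k \in R))%:R)
     (fun j k => 0) (fun j k => 0)
     (fun j k => ((j == k) && (k \in R))%:R)) => a k /=;
rewrite mxE big_split /= !sum_sel big1 ?addr0 ?add0r //; try by move=> j _; rewrite mulr0.
all: by case: (k \in R).
Qed.

Definition touches {n} (g : gate n) (j : 'I_n) : bool :=
  match g with Hg k => k == j | Sg k => k == j | CNOTg c t => (c == j) || (t == j) end.

Lemma gate_untouched {m n} (g : gate n) (T : tableau m n) j a :
  ~~ touches g j -> (apply_gate g T).1 a j = T.1 a j /\ (apply_gate g T).2 a j = T.2 a j.
Proof.
case: g => [k|k|c t] /=; rewrite ?negb_or => h; rewrite !mxE.
- by rewrite eq_sym (negbTE h).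
- by rewrite eq_sym (negbTE h).
- by case/andP: h => h1 h2; rewrite eq_sym (negbTE h2) eq_sym (negbTE h1).
Qed.

Lemma circuit_untouched {m n} (gs : seq (gate n)) (T : tableau m n) j a :
  all (fun g => ~~ touches g j) gs ->
  (apply_circuit gs T).1 a j = T.1 a j /\ (apply_circuit gs T).2 a j = T.2 a j.
Proof.
elim: gs T => [|g gs IH] T //= /andP [hg hs].
have [<- <-] := gate_untouched g T j a hg.
exact: IH.
Qed.

Lemma apply_cat m n (s1 s2 : seq (gate n)) (T : tableau m n) :
  apply_circuit (s1 ++ s2) T = apply_circuit s2 (apply_circuit s1 T).
Proof. by rewrite /apply_circuit foldl_cat. Qed.

Lemma step1_one {m n} (v w : 'I_n -> 'F_2) j0 (T : tableau m n) a :
  (apply_circuit (step1_gates v w j0) T).1 a j0 =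
  if in_support v w j0 then T.1 a j0 * v j0 + T.2 a j0 * w j0 else T.1 a j0.
Proof.
rewrite /step1_gates /in_support.
case: (F2cases (v j0)) => ->; case: (F2cases (w j0)) => -> /=;
rewrite ?eqxx /= ?mulr0 ?mulr1 ?addr0 ?add0r //=; rewrite !mxE ?eqxx //.
all: exact: addrC.
Qed.

Lemma step1_touch {n} (v w : 'I_n -> 'F_2) j0 k :
  (k != j0) || ~~ in_support v w j0 -> all (fun g => ~~ touches g k) (step1_gates v w j0).
Proof.
rewrite /step1_gates /in_support => h.
case: ifP => [/andP [_ /eqP hw]|_]; last case: ifP => [/andP [_ /eqP hw]|_] //=.
- by move: h; rewrite hw oner_eq0 orbT orbF /= andbT eq_sym.
- by move: h; rewrite hw oner_eq0 orbT orbF /= andbT andbb eq_sym.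
Qed.

Lemma step1_all {m n} (v w : 'I_n -> 'F_2) (L : seq 'I_n) (T : tableau m n) a k :
  uniq L ->
  (apply_circuit (flatten [seq step1_gates v w j | j <- L]) T).1 a k =
  if (k \in L) && in_support v w k then T.1 a k * v k + T.2 a k * w k else T.1 a k.
Proof.
elim: L T => [|j0 L IH] T //= /andP [nj0 uL].
rewrite apply_cat IH // in_cons.
have [-> | nk] := eqVneq k j0; rewrite ?eqxx ?(negbTE nk).
  by rewrite (negbTE nj0) /= step1_one.
have [-> ->] := circuit_untouched (step1_gates v w j0) T k a (step1_touch v w j0 k (introT orP (or_introl nk))).
by [].
Qed.

Lemma cnot_all {m n} (i : 'I_n) (L : seq 'I_n) (T : tableau m n) a k :
  all (fun j => j != i) L ->
  (apply_circuit [seq CNOTg j i | j <- L] T).1 a k =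
  if k == i then T.1 a i + \sum_(j <- L) T.1 a j else T.1 a k.
Proof.
elim: L T k => [|j0 L IH] T k /=.
  by rewrite big_nil addr0; case: eqP => [->|].
case/andP=> hj0 hL; rewrite IH // big_cons !mxE eqxx.
case: (k == i) => //; rewrite -addrA; congr (_ + (_ + _)).
rewrite big_seq_cond [RHS]big_seq_cond; apply: eq_bigr => j /andP [jL _].
by rewrite mxE (negbTE (allP hL j jL)).
Qed.

Lemma cnt n (P : pred 'I_n) : count P (enum 'I_n) = #|P|.
Proof. by rewrite cardE -size_filter /enum_mem -enumT /= filter_predT. Qed.

Lemma step1_nocnot {n} (v w : 'I_n -> 'F_2) (L : seq 'I_n) :
  count (@is_cnot n) (flatten [seq step1_gates v w j | j <- L]) = 0%N.
Proof.
elim: L => //= j L IH; rewrite count_cat IH addn0 /step1_gates.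
by case: ifP => //; case: ifP.
Qed.

Lemma stage_props m n (T : tableau m n) gs T' : stage T gs T' ->
  [/\ (#|remaining T'| < #|remaining T|)%N, (cnot_count gs <= stage_rank T)%N,
      (cnot_count gs < #|remaining T|)%N & (tab_rank T' <= tab_rank T)%N].
Proof.
case=> hR [v [w [i [hout hnull hi hw [hgs hT']]]]].
set S := [set j | in_support v w j] in hw.
have SR : S \subset remaining T.
  apply/subsetP => j; rewrite inE; apply: contraLR => /hout [hv hw0].
  by rewrite /in_support hv hw0 eqxx.
have hcnt : cnot_count gs = #|S :\ i|.
  rewrite hgs /cnot_count /stage_gates count_cat step1_nocnot add0n count_map.
  rewrite (eq_count (a2 := predT)) // count_predT size_filter cnt.
  by apply: eq_card => j; rewrite !inE.
have hS : #|S| = #|S :\ i|.+1 by rewrite (cardsD1 i S) inE hi.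
have hSR := subset_leq_card SR.
have hsub : remaining T' \subset remaining T :\ i.
  apply/subsetP => k; rewrite !inE => /existsP [a]; apply: contraR.
  rewrite negb_and negbK => hk; apply/eqP.
  rewrite hT' hgs /stage_gates apply_cat cnot_all; last first.
    by apply/allP => j; rewrite mem_filter => /andP [/andP [h _] _].
  case: (eqVneq k i) => [ek|nki].
    subst k.
    rewrite ?eqxx step1_all ?enum_uniq // mem_enum hi /= big_filter.
    rewrite (eq_bigr (fun j => T.1 a j * v j + T.2 a j * w j)); last first.
      by move=> j /andP [_ hj]; rewrite step1_all ?enum_uniq // mem_enum hj.
    set F := fun j => T.1 a j * v j + T.2 a j * w j.
    have e1 : \sum_j F j = \sum_(j | in_support v w j) F j.
      rewrite (bigID (in_support v w)) /= [X in _ + X]big1 ?addr0 //.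
      by move=> j; rewrite /in_support => /norP [/negPn/eqP hv /negPn/eqP hw0]; rewrite /F hv hw0 !mulr0 addr0.
    have e2 := bigD1 i (F := F) hi.
    rewrite -[RHS](hnull a) -/F e1 e2 /=; congr (_ + _); rewrite big_enum_cond /=; apply: eq_bigl => j; by rewrite andbC.
  rewrite step1_all ?enum_uniq // mem_enum /=.
  have kR : k \notin remaining T by rewrite inE; case/orP: hk => // ki; rewrite ki in nki.
  have [hv hw'] := hout k kR.
  rewrite /in_support hv hw' eqxx /=.
  by move: kR; rewrite inE negb_exists => /forallP /(_ a) /negPn /eqP.
split.
- apply: (leq_ltn_trans (subset_leq_card hsub)).
  by rewrite (cardsD1 i (remaining T)) (subsetP SR i) ?inE.
- rewrite hcnt; have := restrict_rank m n T; lia.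
- by rewrite hcnt (leq_trans _ hSR) // hS.
- by rewrite hT'; exact: circuit_rank.
Qed.

Fixpoint Fb (r N : nat) : nat := if N is N'.+1 then (Fb r N' + minn r N')%N else 0%N.

Lemma Fb_mono r N M : (N <= M)%N -> (Fb r N <= Fb r M)%N.
Proof.
move=> h; rewrite -(subnKC h); elim: (M - N)%N => [|d IH]; first by rewrite addn0.
rewrite addnS /=; exact: leq_trans IH (leq_addr _ _).
Qed.

Lemma Fb_small r N : (N <= r)%N -> (2 * Fb r N + N = N * N)%N.
Proof.
elim: N => [|N IH] //= h.
have := IH (ltnW h); rewrite (minn_idPr (ltnW h)); nia.
Qed.

Lemma Fb_closed r N : (r <= N)%N -> (2 * Fb r N + r * r.+1 = 2 * N * r)%N.
Proof.
elim: N => [|N IH] h /=.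
  by move: h; rewrite leqn0 => /eqP ->.
case: (leqP r N) => hr.
  have := IH hr; nia.
have rN : r = N.+1 by apply/eqP; rewrite eqn_leq h hr.
have := @Fb_small r N (ltnW hr); rewrite rN; nia.
Qed.

Lemma run_bound m n (T : tableau m n) gs : run T gs ->
  forall r, (tab_rank T <= r)%N -> (cnot_count gs <= Fb r #|remaining T|)%N.
Proof.
elim=> {T gs} [T _ | T gs T' gs' hst _ IH] r hr; first by [].
have [h1 h2 h3 h4] := @stage_props _ _ _ _ _ hst.
have := IH r (leq_trans h4 hr).
rewrite /cnot_count count_cat -/(cnot_count gs) -/(cnot_count gs').
move: h1 h3; case E: #|remaining T| => [|N] // h1 h3 hIH /=.
have hm := @Fb_mono r #|remaining T'| N h1.
have := restrict_rank m n T; lia.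
Qed.

Local Close Scope ring_scope.

Theorem theorem1 (n m : nat) (P : tableau m n) (gs : seq (gate n)) :
  commuting P -> run P gs ->
  (cnot_count gs <= n * tab_rank P - (tab_rank P * (tab_rank P).+1) %/ 2)%N.
Proof.
move=> hc hr.
have hb := @run_bound _ _ _ _ hr _ (leqnn (tab_rank P)).
have hn : (#|remaining P| <= n)%N by apply: leq_trans (max_card _) _; rewrite card_ord.
have := @Fb_mono (tab_rank P) _ _ hn.
have := @Fb_closed _ _ (@isotropic _ _ _ hc).
set r := tab_rank P; set f := Fb r n; set s := (r * r.+1)%N.
move: hb; rewrite -/r => hb e1 e2.
have hd := divn_eq s 2.
have hm : (s %% 2 < 2)%N by rewrite ltn_mod.
rewrite -mulnA in e1.
move: hd hm e1 e2 hb; clearbody s f r.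
move: (s %/ 2)%N (s %% 2)%N (n * r)%N => q t p.
lia.
Qed.
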